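(* Let $x_s<x_t$ be integers, let $C\ge 0$, and let $f:[x_s,x_t]\to\mathbb{R}$ be such that $([x_s,x_t],f)$ is an Ameso($C$) pair. Suppose there exist $x^0\in[x_s,x_t]$ and a positive integer $b$ with $[x^0-b,x^0]\subseteq[x_s,x_t]$ such that $f(x^0)=\min_{y\in[x^0-b,x^0]}f(y)$ and $f(x^0)+C\le\max_{y\in[x^0-b,x^0]}f(y)$. Let $w^*=\min\{w\in[x^0-b,x^0]: f(w)=\max_{y\in[x^0-b,x^0]}f(y)\}$. Then $x^0-b\le w^*<x^0-\frac b2$.
   Context: For integers $a\le b$, $[a,b]$ denotes the set of integers $\{a,a+1,\dots,b\}$. Floors and ceilings of vectors are taken componentwise. A set $D^n\subseteq\mathbb{Z}^n$ is an Ameso set if $\lceil(\vec x+\vec y)/2\rceil,\lfloor(\vec x+\vec y)/2\rfloor\in D^n$ for all $\vec x,\vec y\in D^n$. For $C\ge 0$, $(D^n,f)$ is an Ameso($C$) pair if $D^n$ is an Ameso set, $f:D^n\to\mathbb{R}$ is bounded below, and $f(\vec x)+f(\vec y)+C\ge f(\lceil(\vec x+\vec y)/2\rceil)+f(\lfloor(\vec x+\vec y)/2\rfloor)$ for all $\vec x,\vec y\in D^n$. *)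

(* Defs.v *)
From Stdlib Require Import ZArith Reals.
Open Scope R_scope.

Definition Zint (a b x : Z) : Prop := (a <= x <= b)%Z.

Definition zfloor_half (z : Z) : Z := Z.div z 2.
Definition zceil_half (z : Z) : Z := (- Z.div (- z) 2)%Z.

Definition Ameso_set (D : Z -> Prop) : Prop :=
  forall x y, D x -> D y -> D (zceil_half (x + y)) /\ D (zfloor_half (x + y)).

(* Ameso(C) pair (D, f), with f defined on all of Z but only looked at on D *)
Definition Ameso_pair (C : R) (D : Z -> Prop) (f : Z -> R) : Prop :=
  Ameso_set D /\
  (exists m : R, forall x, D x -> m <= f x) /\
  (forall x y, D x -> D y ->
     f x + f y + C >= f (zceil_half (x + y)) + f (zfloor_half (x + y))).

Definition is_max_on (a b : Z) (f : Z -> R) (M : R) : Prop :=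
  (exists y, Zint a b y /\ f y = M) /\ (forall y, Zint a b y -> f y <= M).

Definition is_min_on (a b : Z) (f : Z -> R) (m : R) : Prop :=
  (exists y, Zint a b y /\ f y = m) /\ (forall y, Zint a b y -> m <= f y).

Definition is_least_with_value (a b : Z) (f : Z -> R) (M : R) (w : Z) : Prop :=
  Zint a b w /\ f w = M /\ (forall v, Zint a b v -> f v = M -> (w <= v)%Z).

(* Main.v *)
Require Import Defs.
From Stdlib Require Import ZArith Reals Lra Lia.
Open Scope R_scope.

Theorem lemma4 (xs xt : Z) (C : R) (f : Z -> R) (x0 b : Z) (M : R) (wstar : Z) :
  (xs < xt)%Z ->
  0 <= C ->
  Ameso_pair C (Zint xs xt) f ->
  Zint xs xt x0 ->
  (0 < b)%Z ->
  (forall y, Zint (x0 - b) x0 y -> Zint xs xt y) ->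
  is_min_on (x0 - b) x0 f (f x0) ->
  is_max_on (x0 - b) x0 f M ->
  f x0 + C <= M ->
  is_least_with_value (x0 - b) x0 f M wstar ->
  (x0 - b <= wstar)%Z /\ IZR wstar < IZR x0 - IZR b / 2.
Proof.
  intros Hst HC [_ [_ Hf]] Hx0 Hb Hsub [_ Hmin] [_ Hmax] HCM [Hw [HwM Hwl]].
  unfold Zint in *.
  split; [lia|].
  assert (Hz : (2 * wstar < 2 * x0 - b)%Z).
  { destruct (Z_lt_le_dec (2 * wstar) (2 * x0 - b)) as [h|h]; [exact h|exfalso].
    set (y := (2 * wstar - x0)%Z).
    assert (Hy : (x0 - b <= y <= x0)%Z) by (unfold y; lia).
    assert (Hc : zceil_half (y + x0) = wstar /\ zfloor_half (y + x0) = wstar).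
    { unfold zceil_half, zfloor_half, y.
      replace (2 * wstar - x0 + x0)%Z with (wstar * 2)%Z by lia.
      replace (- (wstar * 2))%Z with ((- wstar) * 2)%Z by lia.
      rewrite !Z.div_mul by lia. split; lia. }
    destruct Hc as [Hc1 Hc2].
    pose proof (Hf y x0 (Hsub y Hy) (Hsub x0 ltac:(lia))) as Hm.
    rewrite Hc1, Hc2, HwM in Hm.
    pose proof (Hmax y Hy) as Hfy.
    destruct (Rle_lt_or_eq_dec _ _ Hfy) as [lt|eq]; [exfalso; lra|].
    pose proof (Hwl y Hy eq) as Hle.
    assert (wstar = x0) by (unfold y in Hle; lia). clear Hc1 Hc2 Hm. subst y. subst wstar.
    pose proof (Hmin (x0 - b)%Z ltac:(lia)).
    pose proof (Hmax (x0 - b)%Z ltac:(lia)).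
    assert (f (x0 - b)%Z = M) by lra.
    pose proof (Hwl (x0 - b)%Z ltac:(lia) H1). lia. }
  apply IZR_lt in Hz.
  rewrite minus_IZR, !mult_IZR in Hz. simpl in Hz. lra.
Qed.
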